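(* Let $\mathrm{X}$ be a compact Hausdorff space and $g_0,f\in C(\mathrm{X})_+^{-1}$. Then $$\lim_{n\to\infty}\Big(\big\|(ng_0^{-1}+f^{-1})^{-1}\big\|^{-1}-n\|g_0\|^{-1}\Big)^{-1}=\max\{f(x): x\in\operatorname{pk}(g_0)\}.$$
   Context: $C(\mathrm{X})_+^{-1}$ is the set of strictly positive continuous functions on $\mathrm{X}$, with sup-norm $\|\cdot\|$; $h^{-1}=1/h$ pointwise; $\operatorname{pk}(g)=\{x\in\mathrm{X}: g(x)=\|g\|\}$. *)

(* Defs.v *)
From HB Require Import structures.
From mathcomp Require Import all_boot all_order all_algebra.
From mathcomp Require Import all_classical all_reals all_analysis.
Set Implicit Arguments. Unset Strict Implicit. Unset Printing Implicit Defensive.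
Import Order.TTheory GRing.Theory Num.Theory.
Import numFieldNormedType.Exports.
Local Open Scope classical_set_scope.
Local Open Scope ring_scope.

Definition supnorm (R : realType) (X : Type) (h : X -> R) : R :=
  sup [set `|h x| | x in [set: X]].

Definition pk (R : realType) (X : Type) (g : X -> R) : set X :=
  [set x | g x = supnorm g].

(* C(X)_+^{-1}: strictly positive continuous functions *)
Definition pos_cont (R : realType) (X : topologicalType) (h : X -> R) : Prop :=
  continuous h /\ forall x, 0 < h x.

(* Main.v *)
Require Import Defs.
From HB Require Import structures.
From mathcomp Require Import all_boot all_order all_algebra.
From mathcomp Require Import all_classical all_reals all_analysis.
From mathcomp Require Import ring lra.
Import Order.TTheory GRing.Theory Num.Theory.
Import numFieldNormedType.Exports.
Local Open Scope classical_set_scope.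
Local Open Scope ring_scope.

Lemma supnorm_attained (R : realType) (X : topologicalType)
  (cX : compact [set: X]) (x_0 : X) (h : X -> R) :
  continuous h -> (forall x, 0 < h x) ->
  exists y, supnorm h = h y /\ forall x, h x <= h y.
Proof.
move=> hc hp.
have [y _ hy] := @compact_EVT_max X R h setT (ex_intro _ x_0 I) cX
   (@continuous_subspaceT _ _ setT _ hc).
have hy' : forall x, h x <= h y by move=> x; apply: hy; rewrite inE.
exists y; split => //.
rewrite /supnorm; apply/eqP; rewrite eq_le; apply/andP; split.
  apply: ge_sup; first by exists `|h y|, y.
  by move=> _ [x _ <-]; rewrite gtr0_norm // hy'.
have -> : h y = `|h y| by rewrite gtr0_norm.
apply: sup_upper_bound; last by exists y.
split; first by exists `|h y|, y.
by exists (h y) => _ [x _ <-]; rewrite gtr0_norm // hy'.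
Qed.

Lemma ltr0_inv (R : realType) (x : R) : 0 < x -> 0 < x^-1.
Proof. by rewrite invr_gt0. Qed.

Lemma contV (R : realType) (X : topologicalType) (h : X -> R) :
  continuous h -> (forall x, 0 < h x) -> continuous (fun x => (h x)^-1).
Proof.
move=> hc hp x; apply: cvgV; first by rewrite gt_eqF.
exact: hc.
Qed.

Theorem mainTheorem15 (R : realType) (X : topologicalType)
  (cX : compact [set: X]) (hX : hausdorff_space X) (x_0 : X)
  (g0 f : X -> R) (hg0 : pos_cont g0) (hf : pos_cont f) :
  exists2 xm : X, pk g0 xm /\ (forall x, pk g0 x -> f x <= f xm) &
    (fun n : nat =>
       ((supnorm (fun x => (n%:R * (g0 x)^-1 + (f x)^-1)^-1))^-1
        - n%:R * (supnorm g0)^-1)^-1) @ \oo --> f xm.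
Proof.
case: hg0 => gc gp; case: hf => fc fp.
have [y0 [My0 y0max]] := @supnorm_attained R X cX x_0 g0 gc gp.
set M := supnorm g0 in My0 *.
have Mp : 0 < M by rewrite My0.
have gM : forall x, g0 x <= M by move=> x; rewrite My0.
have Pcl : closed (pk g0).
  rewrite /pk (_ : [set x | g0 x = M] = g0 @^-1` [set r | r = M]) //.
  by apply: preimage_closed; [move=> x _; exact: gc | exact: closed_eq].
have Pc : compact (pk g0) by apply: (subclosed_compact Pcl cX).
have [xm xmP xmmax] := @compact_EVT_max X R f (pk g0) (ex_intro _ y0 (esym My0))
   Pc (@continuous_subspaceT _ _ _ _ fc).
rewrite inE in xmP.
have xmmax' : forall x, pk g0 x -> f x <= f xm by move=> x hx; apply: xmmax; rewrite inE.
exists xm => //.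
set L := f xm.
have Lp : 0 < L by apply: fp.
pose q (n : nat) x := n%:R * (g0 x)^-1 + (f x)^-1.
have qp : forall n x, 0 < q n x.
  by move=> n x; rewrite /q ltr_wpDl // ?invr_gt0 // mulr_ge0 // invr_ge0 ltW.
have Hn : forall n : nat, exists y,
    (supnorm (fun x => (n%:R * (g0 x)^-1 + (f x)^-1)^-1))^-1 = q n y
    /\ forall x, q n y <= q n x.
  move=> n.
  have hc : continuous (fun x => (q n x)^-1).
    apply: contV => //; move=> x; rewrite /q.
    apply: cvgD; last exact: contV.
    by apply: cvgMl_tmp; exact: contV.
  have [y [Sy ymax]] := @supnorm_attained R X cX x_0 _ hc (fun x => @ltr0_inv R _ (qp n x)).
  exists y; split.
    by rewrite Sy invrK.
  by move=> x; have := ymax x; rewrite lef_pV2 ?posrE.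

have gxm : g0 xm = M by [].
pose a (n : nat) := (supnorm (fun x => (n%:R * (g0 x)^-1 + (f x)^-1)^-1))^-1
        - n%:R * M^-1.
suff key : a @ \oo --> L^-1.
  have := cvgV (invr_neq0 (lt0r_neq0 Lp)) key.
  by rewrite invrK; apply.
apply/cvgrPdist_le => eps epsp.
have [d dp dK] : exists2 d : R, 0 < d & forall x,
    (f x)^-1 <= L^-1 - eps -> d <= (g0 x)^-1 - M^-1.
  case: (pselect (exists x, (f x)^-1 <= L^-1 - eps)) => [[x1 hx1]|nK]; last first.
    exists 1 => // x hx; exfalso; apply: nK; by exists x.
  pose K := (fun x => (f x)^-1) @^-1` [set r | r <= L^-1 - eps].
  have Kcl : closed K.
    by apply: preimage_closed; [move=> x _; exact: contV | exact: closed_le].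
  have Kc : compact K by apply: (subclosed_compact Kcl cX).
  have phic : continuous (fun x => (g0 x)^-1 - M^-1).
    by move=> x; apply: cvgB; [exact: contV | exact: cvg_cst].
  have [c cK cmin] := @compact_EVT_min X R (fun x => (g0 x)^-1 - M^-1) K
     (ex_intro _ x1 hx1) Kc (@continuous_subspaceT _ _ _ _ phic).
  rewrite inE in cK.
  exists ((g0 c)^-1 - M^-1).
    rewrite lt_neqAle subr_ge0 lef_pV2 ?posrE // gM andbT.
    apply/negP => /eqP h0.
    have gc' : g0 c = M.
      by apply: invr_inj; move/eqP: h0; rewrite eq_sym subr_eq0 => /eqP.
    have := xmmax' c gc'; rewrite -/L -(lef_pV2 Lp (fp c)) => h.
    move: cK; rewrite /K /= => hK; lra.
  by move=> x hx; apply: cmin; rewrite inE.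
exists (Num.Def.trunc (L^-1 / d)).+1 => // n /= hn.
have [y [Sy ymin]] := Hn n.
have ha : a n = n%:R * ((g0 y)^-1 - M^-1) + (f y)^-1.
  rewrite /a Sy /q; ring.
have hup : a n <= L^-1.
  have := ymin xm; rewrite /a Sy /q gxm => h.
  lra.
have phi0 : forall x, 0 <= (g0 x)^-1 - M^-1.
  by move=> x; rewrite subr_ge0 lef_pV2 ?posrE.
have nd : L^-1 <= n%:R * d.
  have h1 := truncnS_gt (L^-1 / d).
  have h2 : (Num.Def.trunc (L^-1 / d)).+1%:R <= n%:R :> R by rewrite ler_nat.
  have := lt_le_trans h1 h2; rewrite ltr_pdivrMr // => h3.
  exact: ltW.
rewrite ger0_norm ?subr_ge0 //.
have f0 : 0 <= (f y)^-1 by rewrite invr_ge0 ltW.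
have n0 : 0 <= n%:R :> R by [].
have := phi0 y; set p := (g0 y)^-1 - M^-1 => hp.
have np : 0 <= n%:R * p by rewrite mulr_ge0.
rewrite ha.
case: (lerP ((f y)^-1) (L^-1 - eps)) => hy.
  have := dK y hy; rewrite -/p => hdp.
  have : n%:R * d <= n%:R * p by rewrite ler_wpM2l.
  lra.
by rewrite -/p; lra.
Qed.
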